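(* For all integers $r$ and all $k\in\{0,1,2,3\}$, the space $\mathcal P_r\Lambda^k(T^3)$ has a basis that is $S_4$-invariant up to sign.
   Context: $T^3\subset\mathbb R^4$ is the standard simplex $\{\lambda_i\ge0,\ \sum\lambda_i=1\}$. $\mathcal P_r\Lambda^k(T^3)$ is the space of restrictions to $T^3$ of $k$-forms on $\mathbb R^4$ with polynomial coefficients of degree at most $r$ (zero if $r<0$). $S_4$ acts by pullback: for $\pi\in S_4$, $S_\pi(\lambda_0,\dots,\lambda_3)=(\lambda_{\pi(0)},\dots,\lambda_{\pi(3)})$ and $\pi$ acts by $S_\pi^*$. A basis is invariant up to sign if every group element maps each basis element to plus or minus a basis element. *)

(* Defs.v *)
From HB Require Import structures.
From mathcomp Require Import all_boot all_order all_algebra all_fingroup.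
From mathcomp Require Import reals.
From mathcomp Require Import mpoly.

Set Implicit Arguments.
Unset Strict Implicit.
Unset Printing Implicit Defensive.

Import Order.TTheory GRing.Theory Num.Theory.
Local Open Scope ring_scope.

Section Forms.
Variable R : realType.

Definition pt := 'I_4 -> R.

Definition in_T3 (x : pt) : Prop :=
  (forall i, 0 <= x i) /\ \sum_(i < 4) x i = 1.

Definition tangent (v : pt) : Prop := \sum_(i < 4) v i = 0.

(* A k-form on R^4 with polynomial coefficients:
   omega = sum_{I subset {0..3}, #|I| = k} p_I dlambda_I,
   dlambda_I = dlambda_{i_1} /\ ... /\ dlambda_{i_k} with i_1 < ... < i_k. *)
Definition pform := {set 'I_4} -> {mpoly R[4]}.

(* Coefficients of degree at most r (all zero if r < 0). *)
Definition deg_le (r : int) (w : pform) : Prop :=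
  forall I : {set 'I_4}, forall m, m \in msupp (w I) -> ((mdeg m)%:Z <= r)%R.

Definition dlam (k : nat) (I : {set 'I_4}) (v : 'I_k -> pt) : R :=
  \det (\matrix_(a < k, b < k) v b (nth ord0 (enum I) a)).

Definition feval (k : nat) (w : pform) (x : pt) (v : 'I_k -> pt) : R :=
  \sum_(I : {set 'I_4} | #|I| == k) (w I).@[x] * dlam I v.

Definition Sperm (p : {perm 'I_4}) (x : pt) : pt := fun i => x (p i).

Definition pullback_eval (k : nat) (p : {perm 'I_4}) (w : pform)
    (x : pt) (v : 'I_k -> pt) : R :=
  feval w (Sperm p x) (fun j => Sperm p (v j)).

(* Two (restricted) forms agree on T^3: equality of restrictions, i.e. same
   values at points of T^3 on tangent vectors of T^3. *)
Definition on_T3 (k : nat) (P : pt -> ('I_k -> pt) -> Prop) : Prop :=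
  forall x (v : 'I_k -> pt), in_T3 x -> (forall j, tangent (v j)) -> P x v.

Definition is_basis (r : int) (k n : nat) (b : 'I_n -> pform) : Prop :=
  [/\ (forall i, deg_le r (b i)),
      (forall c : 'I_n -> R,
          on_T3 (fun x (v : 'I_k -> pt) => \sum_(i < n) c i * feval (b i) x v = 0) ->
          forall i, c i = 0)
    &
      (forall w : pform, deg_le r w ->
          exists c : 'I_n -> R,
            on_T3 (fun x (v : 'I_k -> pt) =>
                     feval w x v = \sum_(i < n) c i * feval (b i) x v))].

Definition invariant_up_to_sign (k n : nat) (b : 'I_n -> pform) : Prop :=
  forall (p : {perm 'I_4}) (i : 'I_n),
    exists (j : 'I_n) (s : bool),
      on_T3 (fun x (v : 'I_k -> pt) =>
               pullback_eval p (b i) x v = (-1) ^+ s * feval (b j) x v).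

End Forms.

(* Main.v *)
From HB Require Import structures.
From mathcomp Require Import all_boot all_order all_algebra all_fingroup.
From mathcomp Require Import reals.
From mathcomp Require Import mpoly.
From mathcomp Require Import ring lra zify.
Require Import Defs.
Set Implicit Arguments.
Unset Strict Implicit.
Unset Printing Implicit Defensive.
Import Order.TTheory GRing.Theory Num.Theory.
Local Open Scope ring_scope.
Section Det.
Variable R : comRingType.

Lemma det_expand (K : finType) (k : nat) (coef : 'I_k -> K -> R) (rows : K -> 'I_k -> R) :
  \det (\matrix_(a < k, b < k) \sum_c coef a c * rows c b) =
  \sum_(g : {ffun 'I_k -> K}) (\prod_a coef a (g a)) * \det (\matrix_(a < k, b < k) rows (g a) b).
Proof.
rewrite /determinant.
transitivity (\sum_(s : 'S_k) \sum_(g : {ffun 'I_k -> K})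
   (-1) ^+ s * \prod_a (coef a (g a) * rows (g a) (s a))).
  apply: eq_bigr => s _; rewrite -big_distrr /=; congr (_ * _).
  rewrite -(bigA_distr_bigA (fun a c => coef a c * rows c (s a))).
  by apply: eq_bigr => a _; rewrite mxE.
rewrite exchange_big; apply: eq_bigr => g _; rewrite big_distrr; apply: eq_bigr => s _.
rewrite big_split /= mulrCA; congr (_ * (_ * _)).
by apply: eq_bigr => a _; rewrite mxE.
Qed.

Lemma det_rows_perm (m k : nat) (x0 : 'I_m) (g : 'I_k -> 'I_m) :
  injective g -> exists s : bool, forall rows : 'I_m -> 'I_k -> R,
  \det (\matrix_(a < k, b < k) rows (g a) b) =
  (-1) ^+ s * \det (\matrix_(a < k, b < k) rows (nth x0 (enum (g @: [set: 'I_k])) a) b).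
Proof.
move=> ig; set S := g @: [set: 'I_k].
have cS : #|S| = k by rewrite card_imset // cardsT card_ord.
have gS a : g a \in enum S by rewrite mem_enum; apply/imsetP; exists a; rewrite ?inE.
have hi a : (index (g a) (enum S) < k)%N by rewrite -cS cardE index_mem.
pose pi a := Ordinal (hi a).
have ipi : injective pi.
  move=> a a' /(congr1 val) /= H; apply: ig.
  by rewrite -(nth_index x0 (gS a)) H nth_index.
exists (perm ipi : 'S_k) => rows.
rewrite -det_perm -det_mulmx -row_permE; congr (\det _).
apply/matrixP => a b; rewrite !mxE permE /= nth_index //.
Qed.

Lemma det_rows_ninj (m k : nat) (rows : 'I_m -> 'I_k -> R) (g : 'I_k -> 'I_m) :
  ~ injective g -> \det (\matrix_(a < k, b < k) rows (g a) b) = 0.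
Proof.
move=> ng.
have [/existsP [a1 /existsP [a2 /andP [n12 e12]]]|] :=
  boolP [exists a1, exists a2, (a1 != a2) && (g a1 == g a2)].
  by apply: (determinant_alternate n12) => b; rewrite !mxE (eqP e12).
move/existsPn => H; exfalso; apply: ng => a1 a2 e.
apply/eqP; move: (H a1) => /existsPn /(_ a2); rewrite e eqxx andbT.
by move/negPn.
Qed.
End Det.

Section Span.
Variables (R : realType) (X : finType) (Y : Type) (D : Y -> Prop) (B : X -> Y -> R).
Definition spanned (f : Y -> R) :=
  exists d : X -> R, forall y, D y -> f y = \sum_x d x * B x y.
Lemma span_ext f g : (forall y, D y -> f y = g y) -> spanned g -> spanned f.
Proof. by move=> fg [d Hd]; exists d => y Dy; rewrite fg // Hd. Qed.
Lemma span0 : spanned (fun _ => 0).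
Proof. by exists (fun _ => 0) => y _; rewrite big1 // => x _; rewrite mul0r. Qed.
Lemma span_base x0 : spanned (B x0).
Proof.
exists (fun x => (x == x0)%:R) => y _.
by rewrite (bigD1 x0) //= eqxx mul1r big1 ?addr0 // => x /negPf ->; rewrite mul0r.
Qed.
Lemma spanZ c f : spanned f -> spanned (fun y => c * f y).
Proof.
move=> [d Hd]; exists (fun x => c * d x) => y Dy /=; rewrite Hd // big_distrr /=.
by apply: eq_bigr => x _; rewrite mulrA.
Qed.
Lemma spanD f g : spanned f -> spanned g -> spanned (fun y => f y + g y).
Proof.
move=> [d Hd] [e He]; exists (fun x => d x + e x) => y Dy; rewrite Hd // He // -big_split.
by apply: eq_bigr => x _; rewrite mulrDl.
Qed.
Lemma span_big (I : Type) (s : seq I) (P : pred I) (F : I -> Y -> R) :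
  (forall i, P i -> spanned (F i)) -> spanned (fun y => \sum_(i <- s | P i) F i y).
Proof.
move=> H; elim: s => [|i s IH].
  by apply: span_ext span0 => y _; rewrite big_nil.
case Pi: (P i).
  by apply: span_ext (spanD (H i Pi) IH) => y _; rewrite big_cons Pi.
by apply: span_ext IH => y _; rewrite big_cons Pi.
Qed.
End Span.

Lemma span_dom (R : realType) (X : finType) (Y : Type) (D D' : Y -> Prop) (B : X -> Y -> R) f :
  (forall y, D' y -> D y) -> spanned D B f -> spanned D' B f.
Proof. by move=> H [d Hd]; exists d => y /H; apply: Hd. Qed.

Section Forms2.
Variable R : realType.

Definition ee (c : 'I_3) (u : pt R) : R := u ord0 + u (lift ord0 c).
Definition pidx (a b : 'I_4) : 'I_3 :=
  inord ((if a == ord0 then val b else if b == ord0 then val a else 6 - a - b).-1).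
Definition psgn (a b : 'I_4) : bool := (a != ord0) && (b != ord0).

Definition EJ (k : nat) (J : {set 'I_3}) (v : 'I_k -> pt R) : R :=
  \det (\matrix_(a < k, b < k) ee (nth ord0 (enum J) a) (v b)).
Definition Ix k := {I : {set 'I_4} | #|I| == k}.
Definition Jx k := {J : {set 'I_3} | #|J| == k}.

Lemma sum_delta (T : finType) (a : T) (F : T -> R) :
  \sum_i (i == a)%:R * F i = F a.
Proof.
by rewrite (bigD1 a) //= eqxx mul1r big1 ?addr0 // => i /negPf ->; rewrite mul0r.
Qed.

Lemma ee_sum c (u : pt R) :
  ee c u = \sum_i ((i == ord0)%:R + (i == lift ord0 c)%:R) * u i.
Proof.
by rewrite /ee; under eq_bigr do rewrite mulrDl; rewrite big_split /= !sum_delta.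
Qed.

Lemma EJ_span k (J : {set 'I_3}) :
  spanned (fun _ : 'I_k -> pt R => True) (fun (I : Ix k) v => dlam (val I) v) (EJ J).
Proof.
pose coef (a : 'I_k) (i : 'I_4) : R :=
  (i == ord0)%:R + (i == lift ord0 (nth ord0 (enum J) a))%:R.
apply: (@span_ext _ _ _ _ _ _ (fun v => \sum_(g : {ffun 'I_k -> 'I_4})
   (\prod_a coef a (g a)) * \det (\matrix_(a < k, b < k) v b (g a)))).
  move=> v _; rewrite /EJ -(det_expand coef (fun i b => v b i)); congr (\det _).
  by apply/matrixP => a b; rewrite !mxE ee_sum.
apply: span_big => g _; apply: spanZ.
have [ig|ng] := boolP (injectiveb g).
  have [s Hs] := det_rows_perm R ord0 (injectiveP _ ig).
  set S := g @: [set: 'I_k].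
  have cS : #|S| == k by rewrite card_imset ?cardsT ?card_ord //; apply/injectiveP.
  apply: (@span_ext _ _ _ _ _ _ (fun v => (-1) ^+ s * dlam S v)).
    by move=> v _; rewrite (Hs (fun i b => v b i)).
  by apply: spanZ; apply: (span_base _ _ (exist _ S cS)).
apply: (@span_ext _ _ _ _ _ _ (fun _ => 0)); last exact: span0.
move=> v _; apply: (@det_rows_ninj R _ _ (fun i b => v b i)).
by move/injectiveP; apply/negP.
Qed.

Definition Lc (i : 'I_4) (c : 'I_3) : R :=
  if i == ord0 then 1/2 else (i == lift ord0 c)%:R - 1/2.

Lemma uE4 (u : pt R) : exists u0 u1 u2 u3 : R, forall i : 'I_4, u i = [:: u0; u1; u2; u3]`_i.
Proof.
exists (u (inord 0)), (u (inord 1)), (u (inord 2)), (u (inord 3)).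
by case=> [[|[|[|[|i]]]] Hi] //=; congr u; apply: val_inj; rewrite /= inordK.
Qed.

Lemma pairP (a b : 'I_4) (u : pt R) : a != b -> tangent u ->
  u a + u b = (-1) ^+ psgn a b * ee (pidx a b) u.
Proof.
have [u0 [u1 [u2 [u3 Hu]]]] := uE4 u.
rewrite /tangent !big_ord_recr big_ord0 /= !Hu /= add0r => ab Ht.
rewrite /ee /psgn /pidx !Hu.
case: a ab => [[|[|[|[|a]]]] Ha] //; case: b => [[|[|[|[|b]]]] Hb] // _;
rewrite /= ?inordK //=; lra.
Qed.

Lemma pidx_inj (a b b' : 'I_4) : a != b -> a != b' -> b != b' -> pidx a b != pidx a b'.
Proof.
rewrite /pidx.
case: a => [[|[|[|[|a]]]] Ha] //; case: b => [[|[|[|[|b]]]] Hb] //;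
case: b' => [[|[|[|[|b']]]] Hb'] //= _ _ _; by rewrite -(inj_eq val_inj) /= !inordK.
Qed.
Lemma u_decomp (u : pt R) : tangent u -> forall i, u i = \sum_c Lc i c * ee c u.
Proof.
have [u0 [u1 [u2 [u3 Hu]]]] := uE4 u.
rewrite /tangent !big_ord_recr big_ord0 /= !Hu /= add0r => Ht i.
rewrite /ee /Lc !big_ord_recr big_ord0 /= !Hu /=.
case: i => [[|[|[|[|i]]]] Hi] //=; lra.
Qed.

Lemma dlam_span k (I : {set 'I_4}) :
  spanned (fun v : 'I_k -> pt R => forall j, tangent (v j))
    (fun (J : Jx k) v => EJ (val J) v) (dlam I).
Proof.
apply: (@span_ext _ _ _ _ _ _ (fun v => \sum_(g : {ffun 'I_k -> 'I_3})
   (\prod_(a < k) Lc (nth ord0 (enum I) a) (g a)) * \det (\matrix_(a < k, b < k) ee (g a) (v b)))).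
  move=> v Hv; rewrite /dlam -(det_expand (fun a c => Lc (nth ord0 (enum I) a) c)
     (fun c b => ee c (v b))); congr (\det _).
  by apply/matrixP => a b; rewrite !mxE; apply: u_decomp.
apply: span_big => g _; apply: spanZ.
have [ig|ng] := boolP (injectiveb g).
  have [s Hs] := det_rows_perm R ord0 (injectiveP _ ig).
  set S := g @: [set: 'I_k].
  have cS : #|S| == k by rewrite card_imset ?cardsT ?card_ord //; apply/injectiveP.
  apply: (@span_ext _ _ _ _ _ _ (fun v => (-1) ^+ s * EJ S v)).
    by move=> v _; rewrite (Hs (fun c b => ee c (v b))).
  by apply: spanZ; apply: (span_base _ _ (exist _ S cS)).
apply: (@span_ext _ _ _ _ _ _ (fun _ => 0)); last exact: span0.
move=> v _; apply: (@det_rows_ninj R _ _ (fun c b => ee c (v b))).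
by move/injectiveP; apply/negP.
Qed.

Definition tv (c : 'I_3) : pt R :=
  fun i => if i == ord0 then 1/2 else (i == lift ord0 c)%:R - 1/2.

Lemma tv_tangent c : tangent (tv c).
Proof.
rewrite /tangent !big_ord_recr big_ord0 /tv /=.
case: c => [[|[|[|c]]] Hc] //=; lra.
Qed.

Lemma ee_tv c c' : ee c' (tv c) = (c' == c)%:R.
Proof.
rewrite /ee /tv eqxx eq_sym (negbTE (neq_lift _ _)) (inj_eq (@lift_inj _ ord0)).
lra.
Qed.

Lemma EJ_tv k (J J0 : {set 'I_3}) : #|J| = k -> #|J0| = k ->
  EJ J (fun b : 'I_k => tv (nth ord0 (enum J0) b)) = (J == J0)%:R.
Proof.
move=> cJ cJ0; rewrite /EJ.
have -> : \matrix_(a < k, b < k) ee (nth ord0 (enum J) a) (tv (nth ord0 (enum J0) b))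
   = \matrix_(a < k, b < k) (nth ord0 (enum J) a == nth ord0 (enum J0) b)%:R.
  by apply/matrixP => a b; rewrite !mxE ee_tv.
have [eJ|nJ] := eqVneq J J0.
  subst J0; have -> : \matrix_(a < k, b < k) (nth ord0 (enum J) a == nth ord0 (enum J) b)%:R
     = 1%:M :> 'M[R]_k.
    apply/matrixP => a b; rewrite !mxE nth_uniq ?enum_uniq //; by rewrite -cardE cJ.
  by rewrite det1.
have : ~~ (J \subset J0) by move: nJ; rewrite eqEcard cJ cJ0 leqnn andbT.
case/subsetPn => x xJ xJ0.
have ha : (index x (enum J) < k)%N by rewrite -cJ cardE index_mem mem_enum.
rewrite (expand_det_row _ (Ordinal ha)) big1 // => b _.
rewrite !mxE /= nth_index ?mem_enum //.
have hb : nth ord0 (enum J0) b \in J0 by rewrite -mem_enum mem_nth // -cardE cJ0.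
have Hn : x != nth ord0 (enum J0) b by apply: contraNneq xJ0 => ->.
by rewrite (negbTE Hn) mul0r.
Qed.

End Forms2.

Lemma enc_inj (n N : nat) (a b : 'I_n -> nat) : (forall i, a i < N)%N -> (forall i, b i < N)%N ->
  (\sum_i a i * N ^ i = \sum_i b i * N ^ i)%N -> forall i, a i = b i.
Proof.
elim: n a b => [|n IH] a b Ha Hb; first by move=> _ [].
rewrite !big_ord_recl /= !expn0 !muln1.
have E c : (\sum_(i < n) c (lift ord0 i) * N ^ (bump 0 i) =
            (\sum_(i < n) c (lift ord0 i) * N ^ i) * N)%N.
  rewrite big_distrl; apply: eq_bigr => i _ /=; by rewrite /bump leq0n add1n expnS [(N * _)%N]mulnC mulnA.
rewrite !E => H.
have N0 : (0 < N)%N by apply: leq_ltn_trans (Ha ord0).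
have h0 : a ord0 = b ord0.
  have := congr1 (modn^~ N) H; rewrite ![(_ + _ * N)%N]addnC !modnMDl !modn_small //.
have h1 := congr1 (divn^~ N) H; rewrite /= ![(_ + _ * N)%N]addnC !divnMDl // !divn_small // !addn0 in h1.
have IH' := IH _ _ (fun i => Ha (lift ord0 i)) (fun i => Hb (lift ord0 i)) h1.
by move=> i; case: (unliftP ord0 i) => [j ->|->].
Qed.

Section Mono.
Variable R : realType.
Variable rn : nat.

Definition Mono := {α : {ffun 'I_4 -> 'I_rn.+1} | (\sum_i (α i : nat) == rn)%N}.
Definition xpow (e : 'I_4 -> nat) (x : pt R) : R := \prod_i x i ^+ e i.
Definition mexp (α : Mono) : 'I_4 -> nat := fun i => val (val α i).

Lemma mexp_sum (α : Mono) : (\sum_i mexp α i)%N = rn.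
Proof. exact: (eqP (valP α)). Qed.

Lemma mexp_inj a b : (forall i, mexp a i = mexp b i) -> a = b.
Proof.
move=> H; apply: val_inj; apply/ffunP => i; apply: val_inj; exact: H.
Qed.

Lemma mono_indep (f : Mono -> R) :
  (forall x, in_T3 x -> \sum_α f α * xpow (mexp α) x = 0) -> forall α, f α = 0.
Proof.
move=> H.
have H1 : forall y : pt R, (forall i, 0 < y i) -> \sum_α f α * xpow (mexp α) y = 0.
  move=> y yp; set s := \sum_i y i.
  have s0 : 0 < s.
    rewrite /s big_ord_recl; have := yp ord0.
    have : 0 <= \sum_(i < 3) y (lift ord0 i) by apply: sumr_ge0 => i _; apply: ltW.
    lra.
  have HT : in_T3 (fun i => y i / s).
    split; first by move=> i; apply: divr_ge0; apply: ltW.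
    by rewrite -mulr_suml divff // lt0r_neq0.
  have := H _ HT.
  have Hx α : xpow (mexp α) (fun i => y i / s) = xpow (mexp α) y / s ^+ rn.
    rewrite /xpow; under eq_bigr do rewrite expr_div_n.
    by rewrite prodf_div prodrXr mexp_sum.
  under eq_bigr do rewrite Hx mulrA; rewrite -mulr_suml => /eqP.
  rewrite mulf_eq0 invr_eq0 expf_eq0 (negbTE (lt0r_neq0 s0)) andbF orbF.
  by move/eqP.
pose N := rn.+1.
pose enc (α : Mono) := (\sum_i mexp α i * N ^ i)%N.
have H2 : forall t : R, 0 < t -> \sum_α f α * t ^+ enc α = 0.
  move=> t t0; rewrite -[RHS](H1 (fun i => t ^+ (N ^ i))); last by move=> i; apply: exprn_gt0.
  apply: eq_bigr => α _; congr (_ * _); rewrite /xpow /enc -prodrXr.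
  by apply: eq_bigr => i _; rewrite -exprM mulnC.
pose P : {poly R} := \sum_α f α *: 'X^(enc α).
have P0 : P = 0.
  apply: (@roots_geq_poly_eq0 _ P [seq (i.+1)%:R | i <- iota 0 (size P)]).
  - apply/allP => z /mapP [i _ ->]; rewrite /root horner_sum.
    under eq_bigr do rewrite hornerZ hornerXn.
    by rewrite H2 // ltr0Sn.
  - rewrite map_inj_uniq ?iota_uniq // => i j /eqP; rewrite eqr_nat eqSS => /eqP.
    done.
  - by rewrite size_map size_iota.
move=> α0; have := congr1 (fun p : {poly R} => p`_(enc α0)) P0.
rewrite /= coef0 coef_sum; under eq_bigr do rewrite coefZ coefXn.
rewrite (bigD1 α0) //= eqxx mulr1 big1 ?addr0 // => α nα.
suff -> : (enc α0 == enc α) = false by rewrite mulr0.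
apply/negbTE; apply: contra nα => /eqP E; apply/eqP; apply: mexp_inj => i.
apply: (enc_inj _ _ (esym E)) => j; exact: ltn_ord.
Qed.

Lemma mono_span (e : 'I_4 -> nat) : (\sum_i e i <= rn)%N ->
  spanned (fun x : pt R => \sum_i x i = 1) (fun (α : Mono) x => xpow (mexp α) x) (xpow e).
Proof.
move=> He; move Hd : (rn - \sum_i e i)%N => d.
elim: d e He Hd => [|d IH] e He Hd.
  have Se : (\sum_i e i)%N = rn by apply/eqP; rewrite eqn_leq He /= -subn_eq0 Hd.
  have ei i : (e i < rn.+1)%N by rewrite ltnS -Se (bigD1 i) //= leq_addr.
  pose α : {ffun 'I_4 -> 'I_rn.+1} := [ffun i => Ordinal (ei i)].
  have Sα : (\sum_i (α i : nat) == rn)%N.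
    by apply/eqP; rewrite -[X in _ = X]Se; apply: eq_bigr => i _; rewrite ffunE.
  apply: (@span_ext _ _ _ _ _ _ (fun x => xpow (mexp (exist _ α Sα)) x)); last first.
    exact: (span_base _ _ (exist _ α Sα)).
  by move=> x _; rewrite /xpow /mexp /=; apply: eq_bigr => i _; rewrite ffunE.
pose e' (i : 'I_4) := fun j => (e j + (j == i))%N.
apply: (@span_ext _ _ _ _ _ _ (fun x => \sum_i xpow (e' i) x)).
  move=> x Sx; rewrite /xpow.
  transitivity ((\prod_i x i ^+ e i) * \sum_i x i); first by rewrite Sx mulr1.
  rewrite big_distrr; apply: eq_bigr => i _; rewrite /e'.
  under [RHS]eq_bigr do rewrite exprD; rewrite big_split /=; congr (_ * _).
  rewrite (bigD1 i) //= eqxx expr1 big1 ?mulr1 // => j /negPf ->; exact: expr0.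
apply: span_big => i _; apply: IH.
  have : (\sum_j e' i j = \sum_j e j + 1)%N.
    rewrite big_split /=; congr (_ + _)%N.
    by rewrite (bigD1 i) //= eqxx big1 // => j /negPf ->.
  move=> ->; move: Hd; lia.
have : (\sum_j e' i j = \sum_j e j + 1)%N.
  rewrite big_split /=; congr (_ + _)%N.
  by rewrite (bigD1 i) //= eqxx big1 // => j /negPf ->.
move=> ->; move: Hd; lia.
Qed.
End Mono.

Section Main.
Variable R : realType.
Variables (k rn : nat).
Variable dc : {set 'I_3} -> Ix k -> R.
Hypothesis Hdc : forall J (v : 'I_k -> pt R), True ->
  EJ J v = \sum_(I : Ix k) dc J I * dlam (val I) v.

Definition Idx := (Mono rn * Jx k)%type.
Definition mono (α : Mono rn) : 'X_{1..4} := [multinom mexp α i | i < 4].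
Definition bform (β : Idx) : pform R :=
  fun I => if insub I is Some I' then dc (val β.2) I' *: 'X_[mono β.1] else 0.

Lemma sum_Ix (F : {set 'I_4} -> R) :
  \sum_(I : {set 'I_4} | #|I| == k) F I = \sum_(I : Ix k) F (val I).
Proof.
rewrite (reindex_omap (val : Ix k -> {set 'I_4}) insub); last first.
  by move=> I cI; rewrite insubT.
by apply: eq_bigl => J; rewrite valK eqxx andbT (valP J).
Qed.

Lemma feval_bform β x (v : 'I_k -> pt R) :
  feval (bform β) x v = xpow (mexp β.1) x * EJ (val β.2) v.
Proof.
rewrite /feval sum_Ix Hdc // big_distrr; apply: eq_bigr => I _.
rewrite /bform valK mevalZ mevalX.
have -> : \prod_i x i ^+ (mono β.1) i = xpow (mexp β.1) x.
  by apply: eq_bigr => i _; rewrite mnmE.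
by rewrite /= mulrCA mulrA.
Qed.

Lemma deg_bform β : deg_le (Posz rn) (bform β).
Proof.
move=> I m; rewrite /bform; case: insubP => [I' _ _|_]; last by rewrite msupp0.
move/msuppZ_le/mem_msuppXP <-; rewrite lez_nat mdegE.
by under eq_bigr do rewrite mnmE; rewrite mexp_sum.
Qed.

Lemma bform_indep (c : Idx -> R) :
  (forall x (v : 'I_k -> pt R), in_T3 x -> (forall j, tangent (v j)) ->
     \sum_β c β * feval (bform β) x v = 0) -> forall β, c β = 0.
Proof.
move=> H [α0 J0].
pose v0 := fun b : 'I_k => @tv R (nth ord0 (enum (val J0)) b).
have Hv : forall j, tangent (v0 j) by move=> j; apply: tv_tangent.
apply: (@mono_indep R rn (fun α => c (α, J0))) => x xT.
rewrite -[RHS](H x v0 xT Hv).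
have -> : \sum_β c β * feval (bform β) x v0 =
    \sum_α \sum_J c (α, J) * feval (bform (α, J)) x v0.
  by rewrite pair_bigA; apply: eq_bigr => -[a j].
apply: eq_bigr => α _; rewrite (bigD1 J0) //= big1 ?addr0.
  rewrite feval_bform /= /v0 EJ_tv ?eqxx ?mulr1 //; exact: (eqP (valP J0)).
move=> J nJ; rewrite feval_bform /= /v0 EJ_tv; last 2 first.
- exact: (eqP (valP J)).
- exact: (eqP (valP J0)).
by rewrite (inj_eq val_inj) (negbTE nJ) mulr0 mulr0.
Qed.

Lemma bform_span (w : pform R) : deg_le (Posz rn) w ->
  spanned (fun xv : pt R * ('I_k -> pt R) => in_T3 xv.1 /\ forall j, tangent (xv.2 j))
    (fun β xv => feval (bform β) xv.1 xv.2) (fun xv => feval w xv.1 xv.2).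
Proof.
move=> Hw; rewrite /feval; apply: span_big => I cI.
apply: (@span_ext _ _ _ _ _ _ (fun xv => \sum_(m <- msupp (w I) | m \in msupp (w I))
    (w I)@_m * (xpow (fun i => m i) xv.1 * dlam I xv.2))).
  move=> [x v] _ /=; rewrite mevalE -big_seq mulr_suml; apply: eq_bigr => m _.
  by rewrite mulrA.
apply: span_big => m mI; apply: spanZ.
have Hm : (\sum_i m i <= rn)%N by have := Hw I m mI; rewrite lez_nat mdegE.
have [a Ha] := mono_span R Hm.
have [e He] := dlam_span R k I.
exists (fun β => a β.1 * e β.2) => -[x v] [[_ Sx] Hv] /=.
rewrite Ha // He //.
rewrite [RHS](eq_bigr (fun β => (a β.1 * e β.2) * (xpow (mexp β.1) x * EJ (val β.2) v)));
  last by move=> β _ /=; rewrite -/(feval (bform β) x v) feval_bform.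
rewrite -(pair_bigA _ (fun α J => (a α * e J) * (xpow (mexp α) x * EJ (val J) v))) /=.
rewrite big_distrl; apply: eq_bigr => α _; rewrite big_distrr; apply: eq_bigr => J _ /=.
by rewrite mulrACA.
Qed.

Lemma bform_inv (p : {perm 'I_4}) β : exists (β' : Idx) (s : bool),
  forall x (v : 'I_k -> pt R), (forall j, tangent (v j)) ->
    pullback_eval p (bform β) x v = (-1) ^+ s * feval (bform β') x v.
Proof.
case: β => α J.
pose σ (c : 'I_3) := pidx (p ord0) (p (lift ord0 c)).
pose sg (c : 'I_3) := psgn (p ord0) (p (lift ord0 c)).
have σinj : injective σ.
  move=> c c' /eqP; apply: contraTeq => ncc; apply: pidx_inj.
  - by rewrite (inj_eq (@perm_inj _ p)) neq_lift.
  - by rewrite (inj_eq (@perm_inj _ p)) neq_lift.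
  - by rewrite !(inj_eq (@perm_inj _ p)) (inj_eq (@lift_inj _ ord0)).
have cJ : #|val J| = k by exact: (eqP (valP J)).
pose g (a : 'I_k) := σ (nth ord0 (enum (val J)) a).
have ginj : injective g.
  move=> a a' /σinj /eqP; rewrite nth_uniq ?enum_uniq // -?cardE ?cJ //.
  by move/eqP/val_inj.
have [s Hs] := det_rows_perm R ord0 ginj.
set S := g @: [set: 'I_k].
have cS : #|S| == k by rewrite card_imset // cardsT card_ord.
have Sα' : (\sum_(i < 4) ([ffun i : 'I_4 => val α ((p^-1)%g i)] i : nat) == rn)%N.
  rewrite (reindex_inj (@perm_inj _ p)) /=.
  under eq_bigr do rewrite ffunE permK.
  exact: (valP α).
pose α' : Mono rn := exist _ [ffun i : 'I_4 => val α ((p^-1)%g i)] Sα'.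
exists (α', exist _ S cS), (odd (\sum_(a < k) sg (nth ord0 (enum (val J)) a))%N (+) s).
move=> x v Hv.
rewrite /pullback_eval !feval_bform /=.
have Hx : xpow (mexp α) (Sperm p x) = xpow (mexp α') x.
  rewrite /xpow /mexp /Sperm /= [RHS](reindex_inj (@perm_inj _ p)) /=.
  by apply: eq_bigr => i _; rewrite ffunE permK.
have HE : EJ (val J) (fun j => Sperm p (v j)) =
   (-1) ^+ (\sum_(a < k) sg (nth ord0 (enum (val J)) a))%N * ((-1) ^+ s * EJ S v).
  rewrite /EJ.
  have -> : \matrix_(a < k, b < k) ee (nth ord0 (enum (val J)) a) (Sperm p (v b)) =
     diag_mx (\row_(a < k) (-1) ^+ sg (nth ord0 (enum (val J)) a)) *m
       \matrix_(a < k, b < k) ee (g a) (v b).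
    rewrite mul_diag_mx; apply/matrixP => a b; rewrite !mxE /ee /Sperm /=.
    apply: pairP => //; by rewrite (inj_eq (@perm_inj _ p)) neq_lift.
  rewrite det_mulmx det_diag; under eq_bigr do rewrite mxE.
  by rewrite prodrXr (Hs (fun c b => ee c (v b))).
rewrite Hx HE signr_addb signr_odd.
ring.
Qed.
End Main.

Lemma sum_rank (R : realType) (T : finType) (F : 'I_#|T| -> R) :
  \sum_(i < #|T|) F i = \sum_(t : T) F (enum_rank t).
Proof.
rewrite (reindex enum_rank) //; exists enum_val => ? _; by rewrite ?enum_rankK ?enum_valK.
Qed.

Theorem corollary2p12 (R : realType) (r : int) (k : nat) :
  (k <= 3)%N ->
  exists (n : nat) (b : 'I_n -> pform R),
    is_basis r k b /\ invariant_up_to_sign k b.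
Proof.
move=> _.
case: r => [rn|m].
  have [dc Hdc] := fin_all_exists (fun J : {set 'I_3} => @EJ_span R k J).
  exists #|{: Mono rn * Jx k}|, (fun i => bform dc (enum_val i)).
  split; [split|].
  - by move=> i; apply: deg_bform.
  - move=> c Hc i.
    have := @bform_indep R k rn dc Hdc (fun β => c (enum_rank β)) _ (enum_val i).
    rewrite enum_valK; apply => x v xT Hv.
    rewrite -[RHS](Hc x v xT Hv) sum_rank; apply: eq_bigr => β _; by rewrite enum_rankK.
  - move=> w Hw; have [d Hd] := @bform_span R k rn dc Hdc w Hw.
    exists (fun i => d (enum_val i)) => x v xT Hv.
    rewrite (Hd (x, v)) ?sum_rank //; apply: eq_bigr => β _; by rewrite enum_rankK.
  - move=> p i; have [β' [s Hs]] := @bform_inv R k rn dc Hdc p (enum_val i).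
    exists (enum_rank β'), s => x v _ Hv; rewrite enum_rankK; exact: Hs.
exists 0%N, (fun _ _ => 0); split; [split|].
- by case.
- by move=> c _ [].
- move=> w Hw; exists (fun _ => 0) => x v _ _; rewrite big_ord0 /feval big1 // => I _.
  have -> : w I = 0.
    apply: msuppnil0; case E: (msupp (w I)) => [|m' s] //.
    by have := Hw I m'; rewrite E inE eqxx => /(_ isT).
  by rewrite meval0 mul0r.
- by move=> p [].
Qed.
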